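(* Let $S$ be a supersymmetric numerical semigroup. Then the blowup semigroup of $S$ is symmetric.
   Context: $S$ is a numerical semigroup (a submonoid of $\mathbb N$ with finite complement) with minimal generators $e<a_1<\dots<a_t$. ${\rm ord}(n;S)$ is the maximum of $\sum c_i$ over $(c_0,\dots,c_t)\in\mathbb N^{t+1}$ with $c_0e+\sum c_ia_i=n$. $S$ is additive if ${\rm ord}(u+e;S)={\rm ord}(u;S)+1$ for all $u\in S$. With $\operatorname{Ap}(S;e)=\{w\in S:w-e\notin S\}=\{w_0<\dots<w_{e-1}\}$, $S$ is supersymmetric if $S$ is additive and, whenever $i+j=e-1$, both $w_i+w_j=w_{e-1}$ and ${\rm ord}(w_i;S)+{\rm ord}(w_j;S)={\rm ord}(w_{e-1};S)$ hold. The blowup is $B=\langle e,a_1-e,\dots,a_t-e\rangle$. A numerical semigroup $T$ with Frobenius number $F(T)$ (the largest integer not in $T$) is symmetric if, whenever $x+y=F(T)$ with $x,y\in\mathbb Z$, exactly one of $x,y$ is in $T$. *)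

(* Defs.v *)
From mathcomp Require Import all_boot all_order all_algebra.
Set Implicit Arguments. Unset Strict Implicit. Unset Printing Implicit Defensive.

Definition numerical_semigroup (S : nat -> Prop) : Prop :=
  S 0 /\ (forall x y, S x -> S y -> S (x + y)) /\
  exists N, forall n, N <= n -> S n.

Definition irreducible_elt (S : nat -> Prop) (x : nat) : Prop :=
  S x /\ 0 < x /\ ~ (exists y z, [/\ S y, S z, 0 < y, 0 < z & x = y + z]).

Definition minimal_generators (S : nat -> Prop) (g : seq nat) : Prop :=
  sorted ltn g /\ forall x, x \in g <-> irreducible_elt S x.

Definition mult (g : seq nat) : nat := head 0 g.

(* Since all generators are >= 1, every coefficient is <= n, so the maximum
   may be taken over coefficient vectors with entries in 'I_n.+1. *)
Definition ord (g : seq nat) (n : nat) : nat :=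
  \max_(c : {ffun 'I_(size g) -> 'I_n.+1}
          | \sum_(i < size g) c i * nth 0 g i == n)
     \sum_(i < size g) (c i : nat).

Definition additive (S : nat -> Prop) (g : seq nat) : Prop :=
  forall u, S u -> ord g (u + mult g) = (ord g u).+1.

(* Apery set Ap(S;e) = {w in S : w - e notin S} (w - e taken in Z). *)
Definition apery (S : nat -> Prop) (e w : nat) : Prop :=
  S w /\ ~ (e <= w /\ S (w - e)).

Definition apery_enum (S : nat -> Prop) (e : nat) (w : nat -> nat) : Prop :=
  (forall i j, i < j < e -> w i < w j) /\
  (forall x, apery S e x <-> exists2 i, i < e & x = w i).

Definition supersymmetric (S : nat -> Prop) (g : seq nat) : Prop :=
  additive S g /\
  forall w, apery_enum S (mult g) w ->
    forall i j, i + j = (mult g).-1 ->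
      w i + w j = w (mult g).-1 /\
      ord g (w i) + ord g (w j) = ord g (w (mult g).-1).

Definition gen_by (l : seq nat) (n : nat) : Prop :=
  exists c : seq nat, size c = size l /\
    \sum_(i < size l) nth 0 c i * nth 0 l i = n.

Definition blowup (g : seq nat) : nat -> Prop :=
  gen_by (mult g :: [seq a - mult g | a <- behead g]).

Definition in_Z (T : nat -> Prop) (z : int) : Prop :=
  (0 <= z)%R /\ T `|z|%N.

Definition symmetric_sg (T : nat -> Prop) : Prop :=
  exists F : int,
    [/\ ~ in_Z T F,
        (forall z : int, (F < z)%R -> in_Z T z) &
        (forall x y : int, (x + y = F)%R ->
           (in_Z T x /\ ~ in_Z T y) \/ (~ in_Z T x /\ in_Z T y))].

(* Main.v *)
Require Import Defs.
From mathcomp Require Import all_boot all_order all_algebra zify.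
From Stdlib Require Import Classical ClassicalEpsilon.
Set Implicit Arguments. Unset Strict Implicit. Unset Printing Implicit Defensive.

Definition sb (P : nat -> Prop) (n : nat) : bool :=
  if excluded_middle_informative (P n) then true else false.
Lemma sbP P n : reflect (P n) (sb P n).
Proof. rewrite /sb; case: excluded_middle_informative => h; constructor; done. Qed.

Lemma S_mul S : numerical_semigroup S -> forall k x, S x -> S (k * x).
Proof.
case=> [h0 [hadd _]] k x hx; elim: k => [|k IH]; first by rewrite mul0n.
by rewrite mulSn; apply: hadd.
Qed.

Lemma g_facts S g : minimal_generators S g -> forall i, i < size g ->
  [/\ S (nth 0 g i), 0 < nth 0 g i & mult g <= nth 0 g i].
Proof.
case=> hs hmem i hi.
have : irreducible_elt S (nth 0 g i) by apply/hmem; exact: mem_nth.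
case=> h1 [h2 _]; split => //.
case: g hs hmem hi {h1 h2} => [//|a g'] hs _ hi.
case: i hi => [|k] hi //=.
have := order_path_min ltn_trans hs => /allP/(_ (nth 0 g' k)) h.
by apply: ltnW; apply: h; apply: mem_nth.
Qed.

Lemma exists_irred S : forall n, S n -> 0 < n -> exists x, irreducible_elt S x.
Proof.
elim/ltn_ind => n IH hn hp.
case: (classic (exists y z, [/\ S y, S z, 0 < y, 0 < z & n = y + z])).
- case=> y [z [hy hz py pz def]]. apply: (IH y) => //; lia.
- move=> hno; exists n; done.
Qed.

Lemma g_nonempty S g : numerical_semigroup S -> minimal_generators S g -> 0 < size g.
Proof.
move=> [h0 [hadd [N hN]]] [_ hmem].
have [x hx] := @exists_irred S N.+1 (hN _ (leqnSn N)) (ltn0Sn N).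
move/hmem: hx; case: g {hmem} => //.
Qed.

Definition rep (g : seq nat) (c : nat -> nat) := \sum_(i < size g) c i * nth 0 g i.

Lemma rep_S S g c : numerical_semigroup S -> minimal_generators S g -> S (rep g c).
Proof.
move=> hS hg; rewrite /rep; elim/big_ind: _.
- by case: hS.
- by move=> x y; case: hS => _ [h _]; apply: h.
- move=> i _; apply: (S_mul hS); by case: (g_facts hg (ltn_ord i)).
Qed.

Lemma S_rep S g : numerical_semigroup S -> minimal_generators S g ->
  forall n, S n -> exists c, rep g c = n.
Proof.
move=> hS hg; elim/ltn_ind => n IH hn.
case: (posnP n) => [->|hp].
  by exists (fun _ => 0); rewrite /rep big1 // => i _; rewrite mul0n.
case: (classic (exists y z, [/\ S y, S z, 0 < y, 0 < z & n = y + z])).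
- case=> y [z [hy hz py pz def]].
  have [c1 h1] := IH y ltac:(lia) hy.
  have [c2 h2] := IH z ltac:(lia) hz.
  exists (fun i => c1 i + c2 i); rewrite def -h1 -h2 /rep -big_split /=.
  by apply: eq_bigr => i _; rewrite mulnDl.
- move=> hno.
  have : n \in g by case: hg => _ h; apply/h.
  move/(nthP 0) => [i hi hni].
  exists (fun j => if j == i then 1 else 0).
  rewrite /rep (bigD1 (Ordinal hi)) //= eqxx mul1n hni big1 ?addn0 //.
  by move=> j /negPf hj; rewrite -val_eqE /= in hj; rewrite hj mul0n.
Qed.
Definition gpos (g : seq nat) := forall i, i < size g -> 0 < nth 0 g i.

Lemma rep_le g c i : gpos g -> i < size g -> c i <= rep g c.
Proof.
move=> hp hi; rewrite /rep (bigD1 (Ordinal hi)) //=.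
apply: leq_trans (leq_addr _ _); rewrite leq_pmulr //; exact: hp.
Qed.

Lemma ord_ge g c n : gpos g -> rep g c = n -> \sum_(i < size g) c i <= ord g n.
Proof.
move=> hp hr.
have hc : forall i : 'I_(size g), c i < n.+1.
  by move=> i; rewrite ltnS -hr; apply: rep_le.
pose cf : {ffun 'I_(size g) -> 'I_n.+1} := [ffun i : 'I_(size g) => inord (c i)].
have hcf : forall i, (cf i : nat) = c i by move=> i; rewrite ffunE inordK.
rewrite /ord.
have -> : \sum_(i < size g) c i = \sum_(i < size g) (cf i : nat).
  by apply: eq_bigr => i _; rewrite hcf.
apply: (leq_bigmax_cond cf).
apply/eqP; rewrite -[X in _ = X]hr /rep; apply: eq_bigr => i _; by rewrite hcf.
Qed.

Lemma ord_att g n c0 : gpos g -> rep g c0 = n ->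
  exists c, rep g c = n /\ \sum_(i < size g) c i = ord g n.
Proof.
move=> hp hr.
have hc : forall i : 'I_(size g), c0 i < n.+1.
  by move=> i; rewrite ltnS -hr; apply: rep_le.
pose cf : {ffun 'I_(size g) -> 'I_n.+1} := [ffun i : 'I_(size g) => inord (c0 i)].
have hcf : forall i, (cf i : nat) = c0 i by move=> i; rewrite ffunE inordK.
pose A := [pred c : {ffun 'I_(size g) -> 'I_n.+1} | \sum_(i < size g) c i * nth 0 g i == n].
have hA : 0 < #|A|.
  apply/card_gt0P; exists cf; rewrite inE; apply/eqP; rewrite -[X in _ = X]hr /rep; apply: eq_bigr => i _; by rewrite hcf.
have [i0 hi0 heq] := @eq_bigmax_cond _ A (fun c => \sum_(i < size g) (c i : nat)) hA.
exists (fun j => if j < size g =P true is ReflectT h then (i0 (Ordinal h) : nat) else 0).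
have e1 : forall i : 'I_(size g), (if i < size g =P true is ReflectT h then (i0 (Ordinal h) : nat) else 0) = i0 i.
  move=> i; case: eqP => [h|]; last by rewrite ltn_ord.
  by congr (nat_of_ord (i0 _)); apply: val_inj.
split.
- rewrite /rep; rewrite inE in hi0; rewrite -[X in _ = X](eqP hi0); apply: eq_bigr => i _; by rewrite e1.
- rewrite /ord; move: heq => /= ->. apply: eq_bigr => i _; by rewrite e1.
Qed.
Definition gge (g : seq nat) := forall i, i < size g -> mult g <= nth 0 g i.

Lemma F1 g c : gge g ->
  rep g c = \sum_(i < size g) c i * (nth 0 g i - mult g) + (\sum_(i < size g) c i) * mult g.
Proof.
move=> hge; rewrite /rep big_distrl -big_split /=; apply: eq_bigr => i _.
by rewrite -mulnDr subnK //; apply: hge.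
Qed.

Definition bexpr g (d : nat -> nat) :=
  d 0 * mult g + \sum_(i < size g) d i * (nth 0 g i - mult g).

Lemma blowup_iff g n : 0 < size g -> (blowup g n <-> exists d, bexpr g d = n).
Proof.
case: g => [//|a g'] _.
pose l := mult (a :: g') :: [seq x - mult (a :: g') | x <- behead (a :: g')].
have hsz : size l = size (a :: g') by rewrite /l /= size_map.
rewrite /blowup -/l.
have hnth : forall i, i < size (a :: g') -> nth 0 l i =
    (if i == 0 then mult (a :: g') else 0) + (nth 0 (a :: g') i - mult (a :: g')).
  move=> [|k] hk /=; first by rewrite subnn addn0.
  by rewrite add0n (nth_map 0).
have key : forall d : nat -> nat, \sum_(i < size l) d i * nth 0 l i = bexpr (a :: g') d.
  move=> d; rewrite /bexpr.
  rewrite hsz.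
  have -> : \sum_(i < size (a :: g')) d i * nth 0 l i =
            \sum_(i < size (a :: g')) ((if (i : nat) == 0 then d 0 * mult (a :: g') else 0) +
                 d i * (nth 0 (a :: g') i - mult (a :: g'))).
    apply: eq_bigr => i _.
    rewrite hnth // mulnDr; case: i => [[|k] hk] //=; by rewrite muln0.
  rewrite big_split /=; congr (_ + _).
  rewrite big_ord_recl /= big1 ?addn0 // => i _; by rewrite -val_eqE.
split.
- case=> c [hc hs]; exists (fun i => nth 0 c i); by rewrite -key.
- case=> d hd; exists (mkseq d (size l)); split; first by rewrite size_mkseq.
  rewrite -hd -key; apply: eq_bigr => i _; by rewrite nth_mkseq.
Qed.
Lemma gpos_of S g : minimal_generators S g -> gpos g.
Proof. by move=> hg i hi; case: (g_facts hg hi). Qed.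
Lemma gge_of S g : minimal_generators S g -> gge g.
Proof. by move=> hg i hi; case: (g_facts hg hi). Qed.

Lemma B_add g x y : 0 < size g -> blowup g x -> blowup g y -> blowup g (x + y).
Proof.
move=> hs /(blowup_iff _ hs) [d1 h1] /(blowup_iff _ hs) [d2 h2].
apply/(blowup_iff _ hs); exists (fun i => d1 i + d2 i).
rewrite -h1 -h2 /bexpr.
under eq_bigr do rewrite mulnDl. rewrite big_split /= mulnDl; lia.
Qed.

Lemma B_adde g x k : 0 < size g -> blowup g x -> blowup g (x + k * mult g).
Proof.
move=> hs /(blowup_iff _ hs) [d h]; apply/(blowup_iff _ hs).
exists (fun i => if i == 0 then d i + k else d i).
rewrite -h /bexpr /=.
rewrite (eq_bigr (fun i : 'I_(size g) => d i * (nth 0 g i - mult g))).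
  by rewrite mulnDl; lia.
move=> [[|i] hi] _ //=; by rewrite /mult -nth0 subnn !muln0.
Qed.

Lemma B0 g : 0 < size g -> blowup g 0.
Proof.
move=> hs; apply/(blowup_iff _ hs); exists (fun _ => 0).
by rewrite /bexpr big1 // => i _; rewrite mul0n.
Qed.

Lemma ord_le S g w : numerical_semigroup S -> minimal_generators S g -> S w ->
  ord g w * mult g <= w.
Proof.
move=> hS hg hw.
have [c0 h0] := S_rep hS hg hw.
have [c [hc hsum]] := ord_att (gpos_of hg) h0.
rewrite -hsum -hc (F1 _ (gge_of hg)); exact: leq_addl.
Qed.

Lemma B_ord S g w : numerical_semigroup S -> minimal_generators S g -> S w ->
  blowup g (w - ord g w * mult g).
Proof.
move=> hS hg hw; have hs := g_nonempty hS hg.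
have [c0 h0] := S_rep hS hg hw.
have [c [hc hsum]] := ord_att (gpos_of hg) h0.
apply/(blowup_iff _ hs); exists (fun i => if i == 0 then 0 else c i).
rewrite -hsum -hc (F1 _ (gge_of hg)) addnK /bexpr mul0n add0n.
apply: eq_bigr => -[[|i] hi] _ //=; by rewrite /mult -nth0 subnn !muln0.
Qed.

Lemma B_back S g b : numerical_semigroup S -> minimal_generators S g -> blowup g b ->
  exists u d0 D, [/\ S u, D <= ord g u & u + d0 * mult g = b + D * mult g].
Proof.
move=> hS hg hb; have hs := g_nonempty hS hg.
move/(blowup_iff _ hs): hb => [d hd].
exists (rep g d), (d 0), (\sum_(i < size g) d i); split.
- exact: rep_S.
- exact: ord_ge (gpos_of hg) _.
- by rewrite (F1 _ (gge_of hg)) -hd /bexpr; lia.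
Qed.

Lemma S_e S g : numerical_semigroup S -> minimal_generators S g -> S (mult g).
Proof.
move=> hS hg; have hs := g_nonempty hS hg.
by have [he _ _] := g_facts hg hs; rewrite /mult -nth0.
Qed.

Lemma S_adde S g u k : numerical_semigroup S -> minimal_generators S g -> S u ->
  S (u + k * mult g).
Proof.
move=> hS hg hu; have := S_mul hS k (S_e hS hg).
case: hS => h0 [hadd _]; exact: hadd.
Qed.

Lemma ord_adde S g u k : numerical_semigroup S -> minimal_generators S g ->
  additive S g -> S u -> ord g (u + k * mult g) = ord g u + k.
Proof.
move=> hS hg hadd hu; elim: k => [|k IH]; first by rewrite mul0n !addn0.
rewrite mulSn [mult g + _]addnC addnA hadd.
  by rewrite IH addnS.
exact: S_adde.
Qed.
Definition apmin (S : nat -> Prop) e r a :=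
  [/\ S a, a %% e = r & forall s, S s -> s %% e = r -> a <= s].
Definition ap S e r := epsilon (inhabits 0) (apmin S e r).

Lemma ap_spec S e r : numerical_semigroup S -> r < e -> apmin S e r (ap S e r).
Proof.
move=> [h0 [hadd [N hN]]] hr; rewrite /ap; apply: epsilon_spec.
pose P n := sb S n && (n %% e == r).
have hex : exists n, P n.
  exists (N * e + r); rewrite /P; apply/andP; split.
    apply/sbP; apply: hN; have : 0 < e by lia. move=> he. nia.
  by rewrite modnMDl modn_small.
case: (ex_minnP hex) => m /andP [/sbP hm /eqP hmr] hmin.
exists m; split => // s hs hsr; apply: hmin; rewrite /P hsr eqxx andbT; exact/sbP.
Qed.

Lemma ap_apery S e r : numerical_semigroup S -> r < e -> apery S e (ap S e r).
Proof.
move=> hS hr; have [ha hm hmin] := ap_spec hS hr; split => // -[hle hs].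
have hm' : (ap S e r - e) %% e = r.
  by rewrite -[in RHS]hm -[in RHS](subnK hle) modnDr.
have := hmin _ hs hm'; lia.
Qed.

Lemma apery_ap S e x : numerical_semigroup S -> S e -> 0 < e -> apery S e x ->
  x = ap S e (x %% e).
Proof.
move=> hS he hep [hx hno].
have [ha hm hmin] := ap_spec hS (ltn_pmod x hep).
set a := ap S e (x %% e) in ha hm hmin *.
have hax := hmin _ hx erefl.
have hq := leq_div2r e hax.
have ex : x = a + (x %/ e - a %/ e) * e.
  have dx := divn_eq x e; have da := divn_eq a e; rewrite hm in da.
  have := leq_mul2r e (a %/ e) (x %/ e); rewrite hq orbT => h.
  rewrite mulnBl; move: dx da h; set q1 := x %/ e; set q2 := a %/ e; set r := x %% e. lia.
case k: (x %/ e - a %/ e) => [|k']; first by rewrite ex k mul0n addn0.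
have ex' : x = a + k'.+1 * e by rewrite -k.
exfalso; apply: hno; split; first by rewrite ex' mulSn; lia.
have -> : x - e = a + k' * e by rewrite ex' mulSn; lia.
have hk := S_mul hS k' he; case: hS => _ [hadd _]; exact: hadd.
Qed.
Definition apseq S e := sort leq [seq ap S e r | r <- iota 0 e].
Definition wenum S e i := nth 0 (apseq S e) i.

Lemma apseq_size S e : size (apseq S e) = e.
Proof. by rewrite /apseq size_sort size_map size_iota. Qed.

Lemma apseq_uniq S e : numerical_semigroup S -> uniq (apseq S e).
Proof.
move=> hS; rewrite /apseq sort_uniq map_inj_in_uniq ?iota_uniq //.
move=> r1 r2; rewrite !mem_iota !add0n => /andP [_ h1] /andP [_ h2] heq.
have [_ m1 _] := ap_spec hS h1; have [_ m2 _] := ap_spec hS h2.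
by rewrite -m1 -m2 heq.
Qed.

Lemma mem_apseq S e x : numerical_semigroup S -> S e -> 0 < e ->
  (x \in apseq S e) <-> apery S e x.
Proof.
move=> hS he hep; rewrite /apseq mem_sort; split.
- move/mapP => [r]; rewrite mem_iota add0n => /andP [_ hr] ->; exact: ap_apery.
- move=> hx; rewrite (apery_ap hS he hep hx); apply: map_f.
  by rewrite mem_iota add0n ltn_pmod.
Qed.

Lemma wenum_ok S e : numerical_semigroup S -> S e -> 0 < e -> apery_enum S e (wenum S e).
Proof.
move=> hS he hep; split.
- move=> i j /andP [hij hj].
  have hsrt : sorted ltn (apseq S e).
    by rewrite ltn_sorted_uniq_leq apseq_uniq //= sort_sorted //; exact: leq_total.
  apply: (sorted_ltn_nth ltn_trans 0 hsrt) => //; rewrite inE apseq_size //; lia.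
- move=> x; rewrite -mem_apseq //; split.
  + move/(nthP 0) => [i hi <-]; exists i => //; by rewrite -(apseq_size S e).
  + move=> [i hi ->]; apply: mem_nth; by rewrite apseq_size.
Qed.
Definition vv S g r := ap S (mult g) r - ord g (ap S (mult g) r) * mult g.

Lemma e_pos S g : numerical_semigroup S -> minimal_generators S g -> 0 < mult g.
Proof.
move=> hS hg; have hs := g_nonempty hS hg.
by have [_ he _] := g_facts hg hs; rewrite /mult -nth0.
Qed.

Lemma v_B S g r : numerical_semigroup S -> minimal_generators S g -> r < mult g ->
  blowup g (vv S g r).
Proof. move=> hS hg hr; rewrite /vv; apply: (B_ord hS hg); by case: (ap_spec hS hr). Qed.

Lemma v_res S g r : numerical_semigroup S -> minimal_generators S g -> r < mult g ->
  exists t, vv S g r = r + t * mult g.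
Proof.
move=> hS hg hr; have hep := e_pos hS hg.
have [ha hm _] := ap_spec hS hr.
have hle := ord_le hS hg ha.
rewrite /vv; set w := ap S (mult g) r in ha hm hle *; set o := ord g w in hle *.
have dw := divn_eq w (mult g); rewrite hm in dw.
have ho : o <= w %/ mult g.
  rewrite -ltnS -(ltn_pmul2r hep); rewrite mulSn; lia.
exists (w %/ mult g - o); rewrite mulnBl.
have := leq_mul2r (mult g) o (w %/ mult g); rewrite ho orbT => h.
move: dw h; set q := w %/ mult g; set e := mult g; lia.
Qed.

Lemma v_notB S g r : numerical_semigroup S -> minimal_generators S g -> additive S g ->
  r < mult g -> ~ (mult g <= vv S g r /\ blowup g (vv S g r - mult g)).
Proof.
move=> hS hg hadd hr [hle hb].
have hep := e_pos hS hg.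
have [hw hno] := ap_apery hS hr.
have hole := ord_le hS hg hw.
have [u [d0 [D [hu hD heq]]]] := B_back hS hg hb.
move: hle hb heq hole hno hw; rewrite /vv.
set w := ap S (mult g) r; set m := ord g w; set e := mult g => hle hb heq hole hno hw.
have eq2 : u + (d0 + m + 1) * e = w + D * e.
  rewrite !mulnDl mul1n; lia.
case: (leqP D (d0 + m + 1)) => hDK.
- have [j hj] : exists j, d0 + m + 1 = D + j by exists (d0 + m + 1 - D); lia.
  rewrite hj mulnDl in eq2.
  have ew : w = u + j * e by lia.
  clear eq2; case: j hj ew => [|j] hj ew.
  + rewrite mul0n addn0 in ew; rewrite -ew -/m in hD; lia.
  + apply: hno; split; first by rewrite ew mulSn; lia.
    have -> : w - e = u + j * e by rewrite ew mulSn; lia.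
    exact: S_adde.
- have [j hj] : exists j, D = d0 + m + 1 + j by exists (D - (d0 + m + 1)); lia.
  rewrite hj mulnDl in eq2.
  have eu : u = w + j * e by lia.
  have := ord_adde j hS hg hadd hw; rewrite -eu -/m => ho.
  lia.
Qed.
Local Notation "n %:Z" := (Posz n) (only parsing) : nat_scope.
Lemma partner S g r : numerical_semigroup S -> minimal_generators S g -> supersymmetric S g ->
  r < mult g ->
  exists2 r', r' < mult g &
    vv S g r + vv S g r' = vv S g (wenum S (mult g) (mult g).-1 %% mult g).
Proof.
move=> hS hg [hadd hsup] hr.
have hep := e_pos hS hg; have he := S_e hS hg.
have hw := wenum_ok hS he hep.
set e := mult g in hr hep he hw *; set w := wenum S e.
have [i hi hai] : exists2 i, i < e & ap S e r = w i.
  by case: hw => _ /(_ (ap S e r)) [h _]; apply: h; apply: ap_apery.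
have hij : i + (e.-1 - i) = e.-1 by lia.
have [hsum hord] := hsup w hw i (e.-1 - i) hij.
have apw : forall k, k < e -> w k = ap S e (w k %% e).
  move=> k hk; apply: apery_ap => //; case: hw => _ /(_ (w k)) [_ h]; apply: h; by exists k.
exists (w (e.-1 - i) %% e); first exact: ltn_pmod.
have hW := apw e.-1 ltac:(lia).
have hj := apw (e.-1 - i) ltac:(lia).
rewrite /vv -/e -hj -hW hai -hord -hsum.
have [hwi _] := ap_apery hS hr; rewrite hai in hwi.
have hwj : S (w (e.-1 - i)) by rewrite hj; case: (ap_spec hS (ltn_pmod (w (e.-1 - i)) hep)).
have l1 := ord_le hS hg hwi; have l2 := ord_le hS hg hwj.
rewrite -/e in l1 l2; rewrite mulnDl; lia.
Qed.

Lemma decomp (e : nat) (z : int) : 0 < e -> exists q r, r < e /\ z = (q * e%:Z + r%:Z)%R.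
Proof.
move=> hep; exists (z %/ e)%Z, `|(z %% e)%Z|%N; split.
- have h1 := @ltz_pmod z e%:Z ltac:(by rewrite ltz_nat).
  have h2 := @modz_ge0 z e%:Z ltac:(by rewrite eqz_nat; lia).
  lia.
- rewrite {1}(divz_eq z e); congr (_ + _)%R.
  have h2 := @modz_ge0 z e%:Z ltac:(by rewrite eqz_nat; lia).
  lia.
Qed.

Lemma charB S g (q : int) r t : numerical_semigroup S -> minimal_generators S g ->
  additive S g -> r < mult g -> vv S g r = r + t * mult g ->
  (in_Z (blowup g) (q * (mult g)%:Z + r%:Z)%R <-> (t%:Z <= q)%R).
Proof.
move=> hS hg hadd hr hv.
have hs := g_nonempty hS hg; have hep := e_pos hS hg.
split.
- move=> [hz hb]; apply/negPn/negP => hlt.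
  set n := `|(q * (mult g)%:Z + r%:Z)%R|%N in hb.
  have hn : n%:Z = (q * (mult g)%:Z + r%:Z)%R by rewrite /n; lia.
  set k := `|(t%:Z - q)%R|%N.
  have hk1 : (0 < k)%N by rewrite /k; lia.
  have hnk : n + k * mult g = vv S g r.
    apply/eqP; rewrite -eqz_nat; apply/eqP; rewrite PoszD PoszM hn hv PoszD PoszM.
    have hkz : k%:Z = (t%:Z - q)%R by rewrite /k; lia.
    rewrite hkz; nia.
  apply: (v_notB hS hg hadd hr); split; first by rewrite -hnk; nia.
  have -> : vv S g r - mult g = n + k.-1 * mult g.
    rewrite -hnk; case: k hk1 {hnk} => // k _ /=; rewrite mulSn; lia.
  exact: B_adde.
- move=> hle; set k := `|(q - t%:Z)%R|%N.
  have hkz : k%:Z = (q - t%:Z)%R by rewrite /k; lia.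
  have -> : (q * (mult g)%:Z + r%:Z)%R = (vv S g r + k * mult g)%:Z.
    rewrite PoszD PoszM hkz hv PoszD PoszM; nia.
  split => //; rewrite absz_nat; apply: B_adde => //; exact: v_B.
Qed.
Lemma in_Z_add g x y : 0 < size g -> in_Z (blowup g) x -> in_Z (blowup g) y ->
  in_Z (blowup g) (x + y)%R.
Proof.
move=> hs [hx bx] [hy by']; split; first lia.
have -> : `|(x + y)%R|%N = (`|x|%N + `|y|%N)%N by lia.
exact: B_add.
Qed.

Theorem lemma4p11 (S : nat -> Prop) (g : seq nat) :
  numerical_semigroup S -> minimal_generators S g -> supersymmetric S g ->
  symmetric_sg (blowup g).
Proof.
move=> hS hg hss.
have hadd : additive S g by case: hss.
have hs := g_nonempty hS hg; have hep := e_pos hS hg.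
have hrW : wenum S (mult g) (mult g).-1 %% mult g < mult g by apply: ltn_pmod.
set rW := wenum S (mult g) (mult g).-1 %% mult g in hrW.
have [tW htW] := v_res hS hg hrW.
set V := vv S g rW in htW.
have hpart : forall r, r < mult g -> exists2 r', r' < mult g & vv S g r + vv S g r' = V.
  move=> r hr; exact: partner.
have hnF : ~ in_Z (blowup g) (V%:Z - (mult g)%:Z)%R.
  have eF : (V%:Z - (mult g)%:Z)%R = ((tW%:Z - 1) * (mult g)%:Z + rW%:Z)%R.
    have aux : forall a b c : nat, (Posz (b + c * a) - Posz a = (Posz c - 1) * Posz a + Posz b)%R.
      by move=> a b c; nia.
    by rewrite htW; apply: aux.
  rewrite eF; move/(charB _ hS hg hadd hrW htW); lia.
exists (V%:Z - (mult g)%:Z)%R; split => //.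
- move=> z hz.
  have [q [r [hr ez]]] := decomp z hep.
  have [t ht] := v_res hS hg hr.
  have [r' hr' hp] := hpart r hr.
  rewrite ez; apply/(charB _ hS hg hadd hr ht).
  rewrite ez in hz. nia.
- move=> x y hxy.
  have [q1 [r1 [hr1 ex]]] := decomp x hep.
  have [q2 [r2 [hr2 ey]]] := decomp y hep.
  have [t1 ht1] := v_res hS hg hr1.
  have [t2 ht2] := v_res hS hg hr2.
  have [r' hr' hp] := hpart r1 hr1.
  have [t' ht'] := v_res hS hg hr'.
  have cx := charB q1 hS hg hadd hr1 ht1.
  have cy := charB q2 hS hg hadd hr2 ht2.
  rewrite -ex in cx; rewrite -ey in cy.
  case: (boolP (t1%:Z <= q1)%R) => h1; case: (boolP (t2%:Z <= q2)%R) => h2.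
  + exfalso; apply: hnF; rewrite -hxy; apply: in_Z_add => //; [exact/cx | exact/cy].
  + left; split; first exact/cx. by move/cy; rewrite (negbTE h2).
  + right; split; last exact/cy. by move/cx; rewrite (negbTE h1).
  + exfalso.
    have e2 : r2 = r'.
      rewrite ex ey in hxy.
      have hK : (r2%:Z - r'%:Z = (t1%:Z + t'%:Z - 1 - q1 - q2) * (mult g)%:Z)%R.
        have hpz : (Posz (vv S g r1) + Posz (vv S g r') = Posz V)%R by rewrite -hp.
        rewrite ht1 ht' in hpz. lia.
      move: hK; set K := (t1%:Z + t'%:Z - 1 - q1 - q2)%R => hK.
      have : K = 0%R.
        case: (classic (K = 0%R)) => // hne; exfalso.
        have : (1 <= K \/ K <= -1)%R by lia.
        case => ?; nia.
      move=> hK0; rewrite hK0 in hK; lia.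
    subst r2.
    have e3 : t2 = t' by rewrite ht2 in ht'; nia.
    subst t2. rewrite ex ey in hxy. nia.
Qed.
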